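(* Let $\mathbb{K}$ be algebraically closed of characteristic zero, $T$ a torus and $V=\bigoplus_{i=1}^nV_i$ a $T$-module with $V_i\cong\mathbb K$ of weight $s_i\in X^*(T)$. Then $(T,V)$ is visible if and only if there is a partition $\{1,\dots,n\}=\bigsqcup_{j=0}^l I_j$ (with $l\ge0$, $I_0$ possibly empty) such that: (i) $\langle s_i\mid 1\le i\le n\rangle=\bigoplus_{j=0}^l\langle s_i\mid i\in I_j\rangle$; (ii) $\dim\langle s_i\mid i\in I_0\rangle=\#I_0$ and $\dim\langle s_i\mid i\in I_j\rangle=\#I_j-1$ for $j\ge1$; (iii) $0\in CH^{\circ}(\{s_i\mid i\in I_j\})$ for every $j\ge1$.
   Context: $(T,V)$ is visible if $V$ contains finitely many nilpotent $T$-orbits ($x$ nilpotent means $0\in\overline{T\cdot x}$). Spans $\langle\cdot\rangle$ are taken in $X^*(T)\otimes_{\mathbb Z}\mathbb Q$. $CH^{\circ}(A)$ is the set of convex combinations $\sum_{a\in A}\alpha_aa$ with all $\alpha_a>0$. *)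

(* Defs.v *)
From HB Require Import structures.
From mathcomp Require Import all_boot all_order all_algebra.
From mathcomp Require Import mpoly.
From Stdlib Require Lists.List.
Set Implicit Arguments. Unset Strict Implicit. Unset Printing Implicit Defensive.
Import Order.TTheory GRing.Theory Num.Theory.
Local Open Scope ring_scope.

(* Torus T = (K^x)^r ; characters X^*(T) = Z^r ; a weight s : 'I_r -> int
   acts by t |-> prod_k (t k)^(s k). *)
Definition torus (K : fieldType) (r : nat) (t : 'I_r -> K) : Prop :=
  forall k, t k != 0.

Definition char_eval (K : fieldType) (r : nat) (s : 'I_r -> int) (t : 'I_r -> K) : K :=
  \prod_(k < r) (t k) ^ (s k).

Definition tact (K : fieldType) (r n : nat) (s : 'I_n -> 'I_r -> int)
  (t : 'I_r -> K) (x : 'I_n -> K) : 'I_n -> K :=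
  fun i => char_eval (s i) t * x i.

Definition orbit (K : fieldType) (r n : nat) (s : 'I_n -> 'I_r -> int)
  (x : 'I_n -> K) : ('I_n -> K) -> Prop :=
  fun y => exists t, torus t /\ y = tact s t x.

Definition zclosure (K : fieldType) (n : nat) (S : ('I_n -> K) -> Prop)
  : ('I_n -> K) -> Prop :=
  fun x => forall p : {mpoly K[n]}, (forall y, S y -> p.@[y] = 0) -> p.@[x] = 0.

Definition nilpotent (K : fieldType) (r n : nat) (s : 'I_n -> 'I_r -> int)
  (x : 'I_n -> K) : Prop :=
  zclosure (orbit s x) (fun _ => 0).

Definition visible (K : fieldType) (r n : nat) (s : 'I_n -> 'I_r -> int) : Prop :=
  exists xs : seq ('I_n -> K),
    forall x, nilpotent s x -> exists2 y, Stdlib.Lists.List.In y xs & orbit s y x.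

(* weights s_i (i in I) as rows of a rational matrix; its row space is
   the Q-span <s_i | i in I> in X^*(T) (x) Q = Q^r *)
Definition wmx (r n : nat) (s : 'I_n -> 'I_r -> int) (I : {set 'I_n}) : 'M[rat]_(n, r) :=
  \matrix_(i, k) (if i \in I then (s i k)%:~R else 0).

Definition zero_in_open_hull (r n : nat) (s : 'I_n -> 'I_r -> int) (I : {set 'I_n}) : Prop :=
  exists a : 'I_n -> rat,
    (forall i, i \in I -> 0 < a i) /\ \sum_(i in I) a i = 1 /\
    (forall k, \sum_(i in I) a i * (s i k)%:~R = 0).

(* Main.v *)
Require Import Defs.
From HB Require Import structures.
From mathcomp Require Import all_boot all_order all_algebra.
From mathcomp Require Import mpoly.
From mathcomp Require Import ring lra zify.
From Stdlib Require Import ClassicalEpsilon Classical FunctionalExtensionality.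
Require Import Defs.
Import Order.TTheory GRing.Theory Num.Theory.
Local Open Scope ring_scope.

Set Implicit Arguments. Unset Strict Implicit. Unset Printing Implicit Defensive.

Lemma sum_delta (I : finType) (p : I) (F : I -> rat) :
  \sum_i (i == p)%:R * F i = F p.
Proof.
rewrite (bigD1 p) //= eqxx mul1r big1 ?addr0 // => i /negbTE ->; by rewrite mul0r.
Qed.

Lemma sep0 (Us : seq rat) : exists mu, forall y, y \in Us -> mu < y.
Proof.
elim: Us => [|y Us [mu IH]]; first by exists 0.
exists (if mu < y then mu else y - 1) => z; rewrite inE => /orP[/eqP->|/IH].
  by case: (ltP mu y) => ? //; lra.
by case: (ltP mu y) => ? H2 //; lra.
Qed.

Lemma sep1 (x : rat) (Us : seq rat) : (forall y, y \in Us -> x < y) ->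
  exists mu, x < mu /\ forall y, y \in Us -> mu < y.
Proof.
elim: Us => [|y Us IH] H; first by exists (x + 1); split => //; lra.
have [mu [H1 H2]] : exists mu, x < mu /\ forall y, y \in Us -> mu < y.
  by apply: IH => z Hz; apply: H; rewrite inE Hz orbT.
have Hy : x < y by apply: H; rewrite inE eqxx.
exists (if mu < y then mu else (x + y) / 2); split.
  by case: (ltP mu y) => ? //; lra.
move=> z; rewrite inE => /orP[/eqP->|/H2]; first by case: (ltP mu y) => ? //; lra.
by case: (ltP mu y) => ? H4 //; lra.
Qed.

Lemma sep (Ls Us : seq rat) : (forall x y, x \in Ls -> y \in Us -> x < y) ->
  exists mu, (forall x, x \in Ls -> x < mu) /\ (forall y, y \in Us -> mu < y).
Proof.
elim: Ls => [|x Ls IH] H.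
  by have [mu Hmu] := sep0 Us; exists mu; split.
have [mu [H1 H2]] : exists mu, (forall x, x \in Ls -> x < mu) /\ (forall y, y \in Us -> mu < y).
  by apply: IH => a b Ha Hb; apply: H => //; rewrite inE Ha orbT.
have [mu1 [H3 H4]] := sep1 (fun y Hy => H x y (mem_head _ _) Hy).
exists (if mu < mu1 then mu1 else mu); split.
  move=> z; rewrite inE => /orP[/eqP->|/H1]; case: (ltP mu mu1) => ? //; try lra.
move=> z Hz; have := H2 z Hz; have := H4 z Hz; case: (ltP mu mu1) => ? ? ?; lra.
Qed.

Section Gordan.

Definition coefG (I : finType) (a : I -> rat) (x : (I * I) + I) (i : I) : rat :=
  match x with
  | inl (p, q) => (i == p)%:R * (- a q) + (i == q)%:R * a p
  | inr j => (i == j)%:R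
  end.

Lemma sum_coefG (I : finType) (a : I -> rat) x (F : I -> rat) :
  \sum_i coefG a x i * F i =
  match x with inl (p, q) => - a q * F p + a p * F q | inr j => F j end.
Proof.
case: x => [[p q]|j] /=; last exact: sum_delta.
have E1 := sum_delta p (fun i => - a q * F i).
have E2 := sum_delta q (fun i => a p * F i).
rewrite /= in E1 E2; rewrite -E1 -E2 -big_split /=.
by apply: eq_bigr => i _; ring.
Qed.

Definition validG (I : finType) (a : I -> rat) (x : (I * I) + I) : bool :=
  match x with
  | inl (p, q) => (0 < a p) && (a q < 0)
  | inr j => a j == 0
  end.

Lemma coefG_ge0 (I : finType) (a : I -> rat) x i : validG a x -> 0 <= coefG a x i.
Proof.
case: x => [[p q]|j] /=; last by case: (i == j).
case/andP => Hp Hq; apply: addr_ge0; apply: mulr_ge0;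
  rewrite ?ler0n //; lra.
Qed.

Theorem gordan (r : nat) : forall (I : finType) (v : I -> 'I_r -> rat),
  (exists lam : 'I_r -> rat, forall i, 0 < \sum_k lam k * v i k) \/
  (exists m : I -> rat, (forall i, 0 <= m i) /\ (exists i, 0 < m i) /\
     forall k, \sum_i m i * v i k = 0).
Proof.
elim: r => [|r IH] I v.
  case: (pickP (@predT I)) => [i _|none].
    right; exists (fun j => (j == i)%:R); split; first by move=> j; case: (j == i).
    by split; [exists i; rewrite eqxx ltr01 | case].
  by left; exists (fun _ => 0) => i; have := none i.
pose a i := v i ord_max.
pose I' := {x : (I * I) + I | validG a x}.
pose v' (x : I') (k : 'I_r) := \sum_i coefG a (val x) i * v i (lift ord_max k).
have [[lam' Hl]|[m' [Hm1 [[x0 Hx0] Hm3]]]] := IH I' v'.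
  pose g i := \sum_k lam' k * v i (lift ord_max k).
  have Hg x : validG a x -> 0 < \sum_i coefG a x i * g i.
    move=> Hx; have := Hl (exist _ x Hx); rewrite /v'.
    under eq_bigr do rewrite mulr_sumr.
    rewrite exchange_big /=; congr (0 < _); apply: eq_bigr => i _.
    by rewrite mulr_sumr; apply: eq_bigr => k _; ring.
  pose Ls := [seq - g p / a p | p <- enum I & 0 < a p].
  pose Us := [seq - g q / a q | q <- enum I & a q < 0].
  have [mu [Hmu1 Hmu2]] : exists mu, (forall x, x \in Ls -> x < mu) /\
                                     (forall y, y \in Us -> mu < y).
    apply: sep => x y /mapP[p]; rewrite mem_filter => /andP[Hp _] ->.
    move=> /mapP[q]; rewrite mem_filter => /andP[Hq _] ->.
    have := Hg (inl (p, q)); rewrite sum_coefG /= Hp Hq => /(_ erefl) H.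
    have Hp0 : a p != 0 by rewrite gt_eqF.
    have Hq0 : a q != 0 by rewrite lt_eqF.
    have E : - a q * g p + a p * g q = (a p * - a q) * (g p / a p - g q / a q).
      move: (g p) (g q) (a p) (a q) Hp0 Hq0 => gp gq ap aq H1 H2; field; by rewrite H1 H2.
    have Hpq : 0 < a p * - a q by apply: mulr_gt0 => //; lra.
    rewrite E pmulr_rgt0 // in H.
    rewrite !mulNr; lra.
  left; exists (fun k => if unlift ord_max k is Some k' then lam' k' else mu) => i.
  rewrite (bigD1_ord ord_max) //= unlift_none.
  under eq_bigr do rewrite liftK.
  rewrite -/(g i) -/(a i).
  have [Hai|Hai|Hai] := ltrgtP (a i) 0.
  - have Hin : - g i / a i \in Us.
      by apply/mapP; exists i => //; rewrite mem_filter Hai mem_enum.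
    have H := Hmu2 _ Hin.
    have E : (- g i / a i) * a i = - g i by rewrite divfK // lt_eqF.
    move: H E; move: (- g i / a i) => X H E; nra.
  - have Hin : - g i / a i \in Ls.
      by apply/mapP; exists i => //; rewrite mem_filter Hai mem_enum.
    have H := Hmu1 _ Hin.
    have E : (- g i / a i) * a i = - g i by rewrite divfK // gt_eqF.
    move: H E; move: (- g i / a i) => X H E; nra.
  - have := Hg (inr i); rewrite sum_coefG /= Hai eqxx => /(_ isT) H.
    by rewrite mulr0 add0r.
right.
pose m i := \sum_(x : I') m' x * coefG a (val x) i.
have Hm0 i : 0 <= m i.
  by apply: sumr_ge0 => x _; apply: mulr_ge0 => //; apply: coefG_ge0; case: x.
exists m; split => //; split.
  have [i0 Hi0] : exists i0, 0 < coefG a (val x0) i0.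
    case: x0 Hx0 => [[[p q]|j] Hv] /= _.
      exists p; move: Hv => /= /andP[Hp Hq]; rewrite eqxx mul1r.
      have -> : (p == q) = false by apply/negbTE/eqP => E; subst; lra.
      rewrite mul0r addr0; lra.
    by exists j; rewrite eqxx ltr01.
  exists i0; rewrite /m (bigD1 x0) //=; apply: ltr_pwDl; first exact: mulr_gt0.
  by apply: sumr_ge0 => x _; apply: mulr_ge0 => //; apply: coefG_ge0; case: x.
have Hsum k : \sum_i m i * v i k = \sum_(x : I') m' x * \sum_i coefG a (val x) i * v i k.
  rewrite /m; under eq_bigr do rewrite mulr_suml.
  rewrite exchange_big /=; apply: eq_bigr => x _; rewrite mulr_sumr.
  by apply: eq_bigr => i _; rewrite mulrA.
move=> k; rewrite Hsum; case: (unliftP ord_max k) => [k'|] ->.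
  by apply: (etrans _ (Hm3 k')).
apply: big1 => [[x Hx]] _ /=; rewrite sum_coefG.
case: x Hx => [[p q]|j] /=.
  by move=> ?; rewrite /a; apply/eqP; rewrite mulf_eq0; apply/orP; right;
     apply/eqP; ring.
by move=> Hj; move: (eqP Hj); rewrite /a => ->; rewrite mulr0.
Qed.

End Gordan.

Definition pb (P : Prop) : bool := if excluded_middle_informative P then true else false.
Lemma pbP (P : Prop) : reflect P (pb P).
Proof. by rewrite /pb; case: excluded_middle_informative => H; constructor. Qed.

Lemma sign_trans (x y z : rat) : 0 < x * y -> 0 < y * z -> 0 < x * z.
Proof.
move=> H1 H2; have H3 := mulr_gt0 H1 H2.
have Hy : y != 0 by apply/eqP => E; move: H1; rewrite E mulr0 ltxx.
have Hyy : 0 < y * y by rewrite lt0r mulf_eq0 orbb Hy /= -expr2 sqr_ge0.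
have E : x * y * (y * z) = (x * z) * (y * y) by ring.
by rewrite E pmulr_lgt0 in H3.
Qed.

Section Comb.
Variables (n r : nat) (s : 'I_n -> 'I_r -> int).

Definition rel (m : 'I_n -> rat) := forall k, \sum_i m i * (s i k)%:~R = 0.
Definition supp (m : 'I_n -> rat) : {set 'I_n} := [set i | m i != 0].
Definition minrel (z : 'I_n -> rat) :=
  [/\ rel z, supp z != set0 &
      forall m, rel m -> supp m \proper supp z -> supp m = set0].

Lemma rel_lin a b m1 m2 : rel m1 -> rel m2 -> rel (fun i => a * m1 i + b * m2 i).
Proof.
move=> H1 H2 k; under eq_bigr do rewrite mulrDl -!mulrA.
by rewrite big_split /= -!mulr_sumr H1 H2 !mulr0 addr0.
Qed.

Lemma rel_sub m1 m2 a : rel m1 -> rel m2 -> rel (fun i => m1 i - a * m2 i).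
Proof.
move=> H1 H2 k; under eq_bigr do rewrite mulrBl -mulrA.
by rewrite sumrB -mulr_sumr H1 H2 mulr0 subr0.
Qed.

Lemma in_supp m i : (i \in supp m) = (m i != 0).
Proof. by rewrite inE. Qed.

Lemma supp_eq0 m : supp m = set0 <-> forall i, m i = 0.
Proof.
split=> [H i|H]; last by apply/setP => i; rewrite in_supp in_set0 H eqxx.
by apply/eqP; rewrite -[_ == _]negbK -in_supp H in_set0.
Qed.

Lemma conformal_aux N : forall c, (#|supp c| < N)%N -> rel c -> supp c != set0 ->
  exists z, minrel z /\ (forall i, z i != 0 -> 0 < z i * c i).
Proof.
elim: N => [//|N IH] c HN Hc Hne.
case: (classic (forall m, rel m -> supp m \proper supp c -> supp m = set0)) => Hmin.
  exists c; split; first by split.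
  move=> i Hi; by rewrite lt0r mulf_eq0 orbb Hi /= -expr2 sqr_ge0.
have [d [Hd Hdc Hdne]] : exists d, [/\ rel d, supp d \proper supp c & supp d != set0].
  apply: NNPP => H; apply: Hmin => m Hm Hmc; apply: NNPP => Hm0.
  by apply: H; exists m; split => //; apply/eqP.
have Hsub : forall i, c i = 0 -> d i = 0.
  move=> i Hci; apply/eqP; apply: contraT => Hdi.
  have : i \in supp c by apply: (subsetP (proper_sub Hdc)); rewrite in_supp.
  by rewrite in_supp Hci eqxx.
have [i1 Hi1] : exists i1, i1 \in supp d by apply/set0Pn.
have [d' [Hd' Hd'c Hd'sub [i2 Hi2]]] : exists d', [/\ rel d', supp d' \proper supp c,
    (forall i, c i = 0 -> d' i = 0) & exists i2, 0 < d' i2 * c i2].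
  have Hci1 : c i1 != 0 by apply/eqP => /Hsub; apply/eqP; rewrite -in_supp.
  have Hdi1 : d i1 != 0 by rewrite -in_supp.
  have Hp : 0 < (d i1 * c i1) ^+ 2 by rewrite exprn_even_gt0 //= mulf_eq0 negb_or Hdi1.
  rewrite expr2 in Hp.
  case: (ltrP 0 (d i1 * c i1)) => Hs.
    by exists d; split => //; exists i1.
  exists (fun i => - d i); split.
  - by move=> k; under eq_bigr do rewrite mulNr; rewrite sumrN Hd oppr0.
  - have -> : supp (fun i => - d i) = supp d by apply/setP => i; rewrite !in_supp oppr_eq0.
    done.
  - by move=> i /Hsub ->; rewrite oppr0.
  - exists i1; rewrite mulNr oppr_gt0 lt_neqAle Hs andbT.
    by rewrite mulf_eq0 negb_or Hdi1 Hci1.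
pose P i := 0 < d' i * c i.
pose F i := c i / d' i.
pose i0 := [arg min_(i < i2 | P i) F i]%O.
have [j0 Hj0 Hmin0] : exists2 j0, P j0 & forall j, P j -> F j0 <= F j.
  by case: (@arg_minP _ _ _ i2 P F Hi2) => j Hj Hm; exists j.
have Hd0 : d' j0 != 0 by apply/eqP => E; move: Hj0; rewrite /P E mul0r ltxx.
have Hc0 : c j0 != 0 by apply/eqP => E; move: Hj0; rewrite /P E mulr0 ltxx.
pose t := F j0.
have Ht : 0 < t.
  have E : t = (d' j0 * c j0) / (d' j0 * d' j0).
    by rewrite /t /F; field.
  rewrite E divr_gt0 //; by rewrite lt0r mulf_eq0 orbb Hd0 /= -expr2 sqr_ge0.
pose c' i := c i - t * d' i.
have Hc' : rel c' by apply: rel_sub.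
have Hc'0 : c' j0 = 0 by rewrite /c' /t /F divfK // subrr.
have Hc'sub : forall i, c i = 0 -> c' i = 0 by move=> i Hi; rewrite /c' Hi Hd'sub // mulr0 subrr.
have Hconf : forall i, c' i != 0 -> 0 < c' i * c i.
  move=> i Hi; have Hci : c i != 0 by apply: contra Hi => /eqP /Hc'sub ->.
  rewrite lt0r mulf_eq0 negb_or Hi Hci /=.
  case: (ltrP 0 (d' i * c i)) => Hs.
    have := Hmin0 i Hs; rewrite -/t /F => Hle.
    have Hdi : d' i != 0 by apply/eqP => E; move: Hs; rewrite E mul0r ltxx.
    have E : c' i * c i = (d' i * c i) * (c i / d' i - t).
      by rewrite /c'; field.
    by rewrite E; apply: mulr_ge0; [apply: ltW | rewrite subr_ge0].
  have E : c' i * c i = c i * c i - t * (d' i * c i) by rewrite /c'; ring.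
  rewrite E; apply: addr_ge0; first by rewrite -expr2 sqr_ge0.
  by rewrite -mulrN; apply: mulr_ge0; [apply: ltW | rewrite oppr_ge0].
have Hsc' : supp c' \subset supp c :\ j0.
  apply/subsetP => i; rewrite in_supp !inE => Hi; apply/andP; split.
    by apply/eqP => E; move: Hi; rewrite E Hc'0 eqxx.
  by apply: contra Hi => /eqP /Hc'sub ->.
have Hne' : supp c' != set0.
  apply/negP => /eqP /supp_eq0 H0.
  have : supp d' = supp c.
    apply/setP => i; rewrite !in_supp.
    have := H0 i; rewrite /c' => /eqP; rewrite subr_eq0 => /eqP ->.
    by rewrite mulf_eq0 negb_or (gt_eqF Ht).
  by move=> E; move: Hd'c; rewrite E properxx.
have HN' : (#|supp c'| < N)%N.
  have H1 := subset_leq_card Hsc'; have H2 := cardsD1 j0 (supp c).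
  have H3 : j0 \in supp c by rewrite in_supp.
  rewrite H3 /= in H2; apply: leq_ltn_trans H1 _; by rewrite -(ltn_add2l 1) -H2 add1n.
have [z [Hz Hzc]] := IH c' HN' Hc' Hne'.
exists z; split => // i Hi; apply: sign_trans (Hzc i Hi) (Hconf i _).
by apply: contra Hi => /eqP Hc0'; move: (Hzc i); rewrite Hc0' mulr0 ltxx => H; apply/eqP;
   apply: contraTeq isT => /H.
Qed.

End Comb.

Section Comb2.
Variables (n r : nat) (s : 'I_n -> 'I_r -> int).
Local Notation rel := (@rel n r s).
Local Notation minrel := (@minrel n r s).

Definition nonneg_rel (J : {set 'I_n}) := exists m,
  [/\ rel m, forall i, 0 <= m i, supp m != set0 & supp m \subset J].
Definition indep (J : {set 'I_n}) := forall m, rel m -> supp m \subset J -> supp m = set0.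
Definition Cpp := forall J, ~ nonneg_rel J -> indep J.

Lemma conformal c : rel c -> supp c != set0 ->
  exists z, minrel z /\ (forall i, z i != 0 -> 0 < z i * c i).
Proof. exact: (@conformal_aux n r s (#|supp c|).+1). Qed.

Lemma conf_supp (z c : 'I_n -> rat) : (forall i, z i != 0 -> 0 < z i * c i) ->
  supp z \subset supp c.
Proof.
move=> H; apply/subsetP => i; rewrite !in_supp => /H.
by apply: contraTneq => ->; rewrite mulr0 ltxx.
Qed.

Lemma minrel_unique z m i0 : minrel z -> rel m -> supp m \subset supp z ->
  i0 \in supp z -> forall i, m i = m i0 / z i0 * z i.
Proof.
case=> Hz Hne Hmin Hm Hsub Hi0.
pose m' i := m i - m i0 / z i0 * z i.
have Hz0 : z i0 != 0 by rewrite -in_supp.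
have Hm' : rel m' by apply: rel_sub.
have Hprop : supp m' \proper supp z.
  apply/properP; split; last first.
    exists i0 => //; rewrite in_supp /m' divfK // subrr eqxx //.
  apply/subsetP => i; rewrite !in_supp /m' => H.
  apply/negP => /eqP Hzi; move: H; rewrite Hzi mulr0 subr0 => Hmi.
  have : i \in supp z by apply: (subsetP Hsub); rewrite in_supp.
  by rewrite in_supp Hzi eqxx.
move=> i; have := Hmin m' Hm' Hprop; move/supp_eq0 => /(_ i) /eqP.
by rewrite /m' subr_eq0 => /eqP.
Qed.

Lemma minrel_pos (HC : Cpp) z : minrel z ->
  exists a, [/\ minrel a, supp a = supp z & forall i, 0 <= a i].
Proof.
move=> Hz; have [Hzr Hzne Hzmin] := Hz.
have : nonneg_rel (supp z).
  apply: NNPP => H; have := HC _ H z Hzr (subxx _).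
  by move=> E; move: Hzne; rewrite E eqxx.
case=> m [Hm Hm0 Hmne Hmsub].
have [i0 Hi0] : exists i0, i0 \in supp m by apply/set0Pn.
have Hi0z : i0 \in supp z by apply: (subsetP Hmsub).
have Hu := minrel_unique Hz Hm Hmsub Hi0z.
have Ha : m i0 / z i0 != 0.
  by rewrite mulf_eq0 negb_or -!in_supp Hi0 invr_eq0 -in_supp Hi0z.
have Hsupp : supp m = supp z.
  by apply/setP => i; rewrite !in_supp Hu mulf_eq0 negb_or Ha.
exists m; split => //; split => //; by rewrite Hsupp.
Qed.

Lemma minrel_sign (HC : Cpp) z : minrel z ->
  (forall i, 0 <= z i) \/ (forall i, z i <= 0).
Proof.
move=> Hz; have [a [Ha Hsupp Ha0]] := minrel_pos HC Hz.
have [Hzr Hzne _] := Hz.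
have [i0 Hi0] : exists i0, i0 \in supp a by apply/set0Pn; rewrite Hsupp.
have Hs : supp z \subset supp a by rewrite Hsupp subxx.
have Hu := minrel_unique Ha Hzr Hs Hi0.
case: (lerP 0 (z i0 / a i0)) => Hb.
  by left => i; rewrite Hu; apply: mulr_ge0.
by right => i; rewrite Hu; apply: mulr_le0_ge0 => //; apply: ltW.
Qed.

Lemma circ_disj (HC : Cpp) a b e : minrel a -> minrel b ->
  (forall i, 0 <= a i) -> (forall i, 0 <= b i) ->
  e \in supp a -> e \in supp b -> supp a = supp b.
Proof.
move=> Ha Hb Ha0 Hb0 Hea Heb.
have [Har Hane Hamin] := Ha; have [Hbr Hbne Hbmin] := Hb.
have Hae : 0 < a e by rewrite lt_neqAle eq_sym -in_supp Hea Ha0.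
have Hbe : 0 < b e by rewrite lt_neqAle eq_sym -in_supp Heb Hb0.
apply: NNPP => Hne.
pose c i := b e * a i - a e * b i.
have Hc : rel c.
  by move=> k; apply: etrans (rel_lin (b e) (- a e) Har Hbr k); apply: eq_bigr => i _;
     rewrite /c mulNr.
have Hce : c e = 0 by rewrite /c mulrC subrr.
have Hcne : supp c != set0.
  apply/negP => /eqP /supp_eq0 H0; apply: Hne; apply/setP => i; rewrite !in_supp.
  have := H0 i; rewrite /c => /eqP; rewrite subr_eq0 => /eqP E.
  have -> : a i = a e / b e * b i.
    have E2 : a i = (b e * a i) / b e by rewrite mulrC mulKf // gt_eqF.
    rewrite E2 E; field; by rewrite gt_eqF.
  by rewrite !mulf_eq0 !negb_or gt_eqF // invr_eq0 gt_eqF.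
have [z [Hz Hzc]] := conformal Hc Hcne.
have [Hzr Hzne Hzmin] := Hz.
have Hze : e \notin supp z.
  rewrite in_supp negbK; apply: contraT => Hz0.
  by have := Hzc e Hz0; rewrite Hce mulr0 ltxx.
have [Hpos|Hneg] := minrel_sign HC Hz.
- have Hsub : supp z \proper supp a.
    apply/properP; split; last by exists e.
    apply/subsetP => i; rewrite !in_supp => Hzi.
    have Hzi' : 0 < z i by rewrite lt_neqAle eq_sym Hzi Hpos.
    have := Hzc i Hzi; rewrite pmulr_rgt0 // /c subr_gt0 => H.
    apply/eqP => Eai; move: H; rewrite Eai mulr0 => H.
    by have := mulr_ge0 (ltW Hae) (Hb0 i); rewrite leNgt H.
  by have := Hamin z Hzr Hsub => E; move: Hzne; rewrite E eqxx.
- have Hsub : supp z \proper supp b.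
    apply/properP; split; last by exists e.
    apply/subsetP => i; rewrite !in_supp => Hzi.
    have Hzi' : z i < 0 by rewrite lt_neqAle Hzi Hneg.
    have := Hzc i Hzi; rewrite nmulr_rgt0 // /c subr_lt0 => H.
    apply/eqP => Ebi; move: H; rewrite Ebi mulr0 => H.
    by have := mulr_ge0 (ltW Hbe) (Ha0 i); rewrite leNgt H.
  by have := Hbmin z Hzr Hsub => E; move: Hzne; rewrite E eqxx.
Qed.

End Comb2.

Section Comb3.
Variables (n r : nat) (s : 'I_n -> 'I_r -> int).
Local Notation rel := (@rel n r s).
Local Notation minrel := (@minrel n r s).
Variable HC : Cpp s.

Lemma rel_ext m1 m2 : (forall i, m1 i = m2 i) -> rel m1 -> rel m2.
Proof. by move=> E H k; apply: (etrans _ (H k)); apply: eq_bigr => i _; rewrite E. Qed.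

Lemma rel0 m : (forall i, m i = 0) -> rel m.
Proof. by move=> H k; apply: big1 => i _; rewrite H mul0r. Qed.

Definition circs : {set {set 'I_n}} :=
  [set S | pb (exists a, [/\ minrel a, supp a = S & forall i, 0 <= a i])].

Lemma circsP S : S \in circs <-> exists a, [/\ minrel a, supp a = S & forall i, 0 <= a i].
Proof. by rewrite inE; split => [/pbP|H]; last apply/pbP. Qed.

Lemma circ_ne S : S \in circs -> S != set0.
Proof. by case/circsP => a [[_ Ha _] <- _]. Qed.

Lemma circ_disj2 S S' : S \in circs -> S' \in circs -> S != S' -> [disjoint S & S'].
Proof.
case/circsP => a [Ha <- Ha0]; case/circsP => b [Hb <- Hb0] Hne.
apply/pred0P => e /=; apply/negP => /andP[Hea Heb].
by move: Hne; rewrite (circ_disj HC Ha Hb Ha0 Hb0 Hea Heb) eqxx.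
Qed.

Definition I0 : {set 'I_n} := ~: \bigcup_(S in circs) S.

Definition blk (j : 'I_#|circs|.+1) : {set 'I_n} :=
  if unlift ord0 j is Some j' then enum_val j' else I0.

Lemma blk0 : blk ord0 = I0.
Proof. by rewrite /blk unlift_none. Qed.

Lemma blkS j' : blk (lift ord0 j') = enum_val j'.
Proof. by rewrite /blk liftK. Qed.

Lemma circ_I0 S : S \in circs -> [disjoint S & I0].
Proof.
move=> HS; apply/pred0P => i /=; apply/negP => /andP[Hi]; rewrite inE => /negP; apply.
by apply/bigcupP; exists S.
Qed.

Lemma circ_blk S : S \in circs -> forall j, S = blk j \/ [disjoint S & blk j].
Proof.
move=> HS j; case: (unliftP ord0 j) => [j'|] ->; last by rewrite blk0; right; exact: circ_I0.
rewrite blkS; case: (eqVneq S (enum_val j')) => [E|Hne]; first by left.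
by right; apply: circ_disj2 => //; apply: enum_valP.
Qed.

Lemma blk_disj j1 j2 : j1 != j2 -> [disjoint blk j1 & blk j2].
Proof.
case: (unliftP ord0 j1) => [j1'|] ->; case: (unliftP ord0 j2) => [j2'|] ->.
- rewrite !blkS => Hne; apply: circ_disj2; try apply: enum_valP.
  by apply: contra Hne => /eqP /enum_val_inj ->.
- by rewrite blkS blk0 => _; apply: circ_I0; apply: enum_valP.
- by rewrite blkS blk0 => _; rewrite disjoint_sym; apply: circ_I0; apply: enum_valP.
- by rewrite eqxx.
Qed.

Lemma blk_cover i : exists j, i \in blk j.
Proof.
case: (boolP (i \in I0)) => Hi; first by exists ord0; rewrite blk0.
move: Hi; rewrite inE negbK => /bigcupP[S HS HiS].
exists (lift ord0 (enum_rank_in HS S)); rewrite blkS enum_rankK_in //.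
Qed.

Definition restrict (m : 'I_n -> rat) (B : {set 'I_n}) i := if i \in B then m i else 0.

Lemma blockrel_aux N : forall m, (#|supp m| < N)%N -> rel m ->
  forall j, rel (restrict m (blk j)).
Proof.
elim: N => [//|N IH] m HN Hm j.
case: (eqVneq (supp m) set0) => [/supp_eq0 H0|Hne].
  by apply: rel0 => i; rewrite /restrict H0; case: ifP.
have [z [Hz Hzc]] := conformal Hm Hne.
have [a [Ha Hsa Ha0]] := minrel_pos HC Hz.
have Hsub : supp a \subset supp m by rewrite Hsa; apply: conf_supp.
have [i0 Hi0] : exists i0, i0 \in supp a by apply/set0Pn; have [_ ? _] := Ha.
have [Har _ _] := Ha.
pose m' i := m i - m i0 / a i0 * a i.
have Hm' : rel m' by apply: rel_sub.
have Hs' : supp m' \subset supp m :\ i0.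
  apply/subsetP => i; rewrite in_supp !inE /m' => H; apply/andP; split.
    by apply/eqP => E; move: H; rewrite E divfK ?subrr ?eqxx // -in_supp.
  apply: contra H => /eqP Hmi.
  have Hai : a i = 0.
    apply/eqP; apply: contraT => Hai.
    have : i \in supp m by apply: (subsetP Hsub); rewrite in_supp.
    by rewrite in_supp Hmi eqxx.
  by rewrite Hmi Hai mulr0 subrr.
have HN' : (#|supp m'| < N)%N.
  have H1 := subset_leq_card Hs'; have H2 := cardsD1 i0 (supp m).
  rewrite (subsetP Hsub _ Hi0) /= in H2; apply: leq_ltn_trans H1 _.
  by rewrite -(ltn_add2l 1) -H2 add1n.
have IHm' := IH m' HN' Hm' j.
have HS : supp a \in circs by apply/circsP; exists a.
have Hra : rel (restrict a (blk j)).
  case: (circ_blk HS j) => [E|Hd].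
    apply: rel_ext Har => i; rewrite /restrict; case: ifP => // Hi.
    by apply/eqP; apply: contraFT Hi; rewrite -in_supp E.
  apply: rel0 => i; rewrite /restrict; case: ifP => // Hi.
  apply/eqP; apply: contraT => Hai.
  by move: Hd => /pred0P /(_ i) /=; rewrite in_supp Hai Hi.
have := rel_lin 1 (m i0 / a i0) IHm' Hra.
apply: rel_ext => i; rewrite /restrict /m'; case: ifP => _; last by rewrite !mulr0 addr0.
by rewrite mul1r subrK.
Qed.

Lemma blockrel m : rel m -> forall j, rel (restrict m (blk j)).
Proof. exact: (@blockrel_aux (#|supp m|).+1). Qed.

Lemma I0_indep : indep s I0.
Proof.
move=> m Hm Hsub; apply/eqP; apply: contraT => Hne.
have [z [Hz Hzc]] := conformal Hm Hne.
have [a [Ha Hsa Ha0]] := minrel_pos HC Hz.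
have HS : supp a \in circs by apply/circsP; exists a.
have Hd := circ_I0 HS.
have [i Hi] : exists i, i \in supp a by apply/set0Pn; have [_ ? _] := Ha.
have : i \in I0.
  apply: (subsetP Hsub); apply: (subsetP (conf_supp Hzc)); by rewrite -Hsa.
by move: Hd => /pred0P /(_ i) /=; rewrite Hi /= => ->.
Qed.

End Comb3.

Section Rank.
Variables (n r : nat) (s : 'I_n -> 'I_r -> int).
Local Notation rel := (@rel n r s).
Local Notation minrel := (@minrel n r s).
Variable S : {set 'I_n}.

Definition fS (j : 'I_#|S|) : 'I_n := enum_val j.
Definition MS : 'M[rat]_(#|S|, r) := rowsub fS (wmx s setT).
Definition ext (u : 'rV[rat]_#|S|) : 'I_n -> rat := fun i => \sum_(j | fS j == i) u 0 j.
Definition res (m : 'I_n -> rat) : 'rV[rat]_#|S| := \row_j m (fS j).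

Lemma fS_in j : fS j \in S.
Proof. exact: enum_valP. Qed.

Lemma fS_inj : injective fS.
Proof. exact: enum_val_inj. Qed.

Lemma mul_MS u k : (u *m MS) 0 k = \sum_i ext u i * (s i k)%:~R.
Proof.
rewrite mxE (partition_big fS xpredT) //=; apply: eq_bigr => i _.
rewrite /ext mulr_suml; apply: eq_bigr => j /eqP <-.
by rewrite /MS !mxE in_setT.
Qed.

Lemma MS_rel u : u *m MS = 0 <-> rel (ext u).
Proof.
split=> [H k|H]; first by rewrite -mul_MS H mxE.
by apply/rowP => k; rewrite mul_MS H mxE.
Qed.

Lemma ext_supp u : supp (ext u) \subset S.
Proof.
apply/subsetP => i; rewrite in_supp; apply: contraR => Hi.
by apply/eqP; apply: big_pred0 => j; apply/negP => /eqP E; move: (fS_in j); rewrite E (negbTE Hi).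
Qed.

Lemma res_ext u : res (ext u) = u.
Proof.
apply/rowP => j; rewrite mxE /ext (bigD1 j) //= big1 ?addr0 ?ord1 // => j' /andP[/eqP E Hne].
by move: Hne; rewrite (fS_inj E) eqxx.
Qed.

Lemma ext_res m i : ext (res m) i = restrict m S i.
Proof.
rewrite /ext /restrict; case: ifP => Hi.
  rewrite (bigD1 (enum_rank_in Hi i)) /=; last by rewrite /fS enum_rankK_in.
  rewrite big1 ?addr0; first by rewrite mxE /fS enum_rankK_in.
  move=> j /andP[/eqP E Hne]; exfalso; move/negP: Hne; apply; apply/eqP; apply: fS_inj; by rewrite E /fS enum_rankK_in.
apply: big_pred0 => j; apply/negP => /eqP E; move: (fS_in j); by rewrite E Hi.
Qed.

Lemma wmx_MS : (wmx s S == MS)%MS.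
Proof.
apply/andP; split; apply/row_subP => i.
  case: (boolP (i \in S)) => Hi.
    have -> : row i (wmx s S) = row (enum_rank_in Hi i) MS.
      by apply/rowP => k; rewrite !mxE /fS enum_rankK_in // in_setT Hi.
    exact: row_sub.
  have -> : row i (wmx s S) = 0 by apply/rowP => k; rewrite !mxE (negbTE Hi).
  exact: sub0mx.
have -> : row i MS = row (fS i) (wmx s S) by apply/rowP => k; rewrite !mxE fS_in in_setT.
exact: row_sub.
Qed.

Lemma rank_wmx : \rank (wmx s S) = \rank MS.
Proof. exact: eqmx_rank wmx_MS. Qed.

Lemma kerrow_rel i : rel (ext (row i (kermx MS))).
Proof. by apply/MS_rel; rewrite -row_mul mulmx_ker row0. Qed.

Lemma indep_rank : indep s S <-> \rank (wmx s S) = #|S|.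
Proof.
rewrite rank_wmx; split=> [H|H].
  have K0 : kermx MS = 0.
    apply/row_matrixP => i; rewrite row0.
    have Hr := kerrow_rel i.
    have /supp_eq0 E := H _ Hr (ext_supp _).
    by rewrite -[row i _]res_ext; apply/rowP => j; rewrite !mxE E.
  have := mxrank_ker MS; rewrite K0 mxrank0 => /esym /eqP.
  by rewrite subn_eq0 => Hle; apply/eqP; rewrite eqn_leq rank_leq_row Hle.
have K0 : kermx MS = 0.
  by apply/eqP; rewrite -mxrank_eq0 mxrank_ker H subnn.
move=> m Hm Hsub; apply/supp_eq0 => i.
have Hres : res m *m MS = 0.
  apply/MS_rel; apply: rel_ext Hm => i'; rewrite ext_res /restrict; case: ifP => // Hi'.
  by apply/eqP; apply: contraFT Hi' => Hmi; apply: (subsetP Hsub); rewrite in_supp.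
have : (res m <= kermx MS)%MS by apply/sub_kermxP.
rewrite K0 submx0 => /eqP E0.
case: (boolP (i \in S)) => Hi.
  by move/rowP: E0 => /(_ (enum_rank_in Hi i)); rewrite !mxE /fS enum_rankK_in.
by apply/eqP; apply: contraR Hi => Hmi; apply: (subsetP Hsub); rewrite in_supp.
Qed.

Lemma res_neq0 a i : i \in S -> a i != 0 -> res a != 0.
Proof.
move=> Hi Ha; apply/eqP => /rowP /(_ (enum_rank_in Hi i)).
by rewrite !mxE /fS enum_rankK_in // => E; move: Ha; rewrite E eqxx.
Qed.

Lemma res_rel a : rel a -> supp a \subset S -> res a *m MS = 0.
Proof.
move=> Ha Hs; apply/MS_rel; apply: rel_ext Ha => i; rewrite ext_res /restrict.
case: ifP => // Hi; apply/eqP; apply: contraFT Hi => Hai.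
by apply: (subsetP Hs); rewrite in_supp.
Qed.

Lemma circ_rank a : minrel a -> supp a = S -> (\rank (wmx s S)).+1 = #|S|.
Proof.
move=> Ha Hsa; have [Har Hne _] := Ha.
have [i0 Hi0] : exists i0, i0 \in supp a by apply/set0Pn.
have Hi0S : i0 \in S by rewrite -Hsa.
have Ka : (kermx MS == res a)%MS.
  apply/andP; split; last by apply/sub_kermxP; apply: res_rel => //; rewrite Hsa.
  apply/row_subP => i; set u := row i _.
  have Hr : rel (ext u) by apply: kerrow_rel.
  have Hs : supp (ext u) \subset supp a by rewrite Hsa; apply: ext_supp.
  have Hu := minrel_unique Ha Hr Hs Hi0.
  apply/sub_rVP; exists (ext u i0 / a i0).
  apply/rowP => j; transitivity (res (ext u) 0 j); first by rewrite res_ext.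
  rewrite !mxE; exact: Hu.
have := mxrank_ker MS; rewrite (eqmx_rank Ka) rank_rV (res_neq0 Hi0S) ?(in_supp a i0) //;
  last by rewrite -in_supp.
rewrite rank_wmx => H; have := rank_leq_row MS; lia.
Qed.

Lemma rank1_unique a : (\rank (wmx s S)).+1 = #|S| -> rel a -> supp a = S ->
  forall m, rel m -> supp m \subset S -> exists al, forall i, m i = al * a i.
Proof.
move=> Hrk Ha Hsa m Hm Hsm.
have Hne : supp a != set0.
  by apply/eqP => E; move: Hrk; rewrite -Hsa E cards0.
have [i0 Hi0] : exists i0, i0 \in supp a by apply/set0Pn.
have Hi0S : i0 \in S by rewrite -Hsa.
have Hker : \rank (kermx MS) = 1%N by rewrite mxrank_ker -rank_wmx -Hrk subSnn.
have Hsub : (res a <= kermx MS)%MS by apply/sub_kermxP; apply: res_rel => //; rewrite Hsa.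
have Hra : \rank (res a) = 1%N by rewrite rank_rV (res_neq0 Hi0S) // -in_supp.
have Hk : (kermx MS <= res a)%MS by rewrite -(mxrank_leqif_sup Hsub).2 Hra Hker.
have Hm' : (res m <= res a)%MS.
  by apply: submx_trans Hk; apply/sub_kermxP; apply: res_rel.
have [al Hal] := sub_rVP Hm'.
exists al => i; case: (boolP (i \in S)) => Hi.
  by move/rowP: Hal => /(_ (enum_rank_in Hi i)); rewrite !mxE /fS enum_rankK_in.
have -> : m i = 0 by apply/eqP; apply: contraR Hi => H; apply: (subsetP Hsm); rewrite in_supp.
have -> : a i = 0 by apply/eqP; apply: contraR Hi => H; rewrite -Hsa in_supp.
by rewrite mulr0.
Qed.

End Rank.

Section MxDirect.
Variables (n r : nat).

Lemma mxdirect_crit l (A : 'I_l -> 'M[rat]_(n, r)) :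
  (forall u : 'I_l -> 'rV_n, \sum_j u j *m A j = 0 -> forall j, u j *m A j = 0) ->
  mxdirect (\sum_j <<A j>>).
Proof.
move=> H; apply/mxdirect_sumsP => j _; apply/eqP; rewrite -submx0.
apply/row_subP => i; set v := row i _.
have Hv := row_sub i (<<A j>> :&: \sum_(j0 | true && (j0 != j)) <<A j0>>)%MS.
rewrite -/v sub_capmx in Hv; case/andP: Hv => H1 H2.
rewrite genmxE in H1; case/submxP: H1 => D HD.
case/sub_sums_genmxP: H2 => u_ Hu.
pose U j' := if j' == j then - D else u_ j'.
have HU : \sum_j' U j' *m A j' = 0.
  rewrite (bigD1 j) //= /U eqxx mulNmx.
  rewrite (eq_bigr (fun j' => u_ j' *m A j')); last by move=> j' /negbTE ->.
  by rewrite -HD (eq_bigl (fun j0 => true && (j0 != j))) // -Hu addNr.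
have := H U HU j; rewrite /U eqxx mulNmx -HD => /eqP; rewrite oppr_eq0 => /eqP ->.
by rewrite submx0.
Qed.

Lemma mxdirect_use l (A : 'I_l -> 'M[rat]_(n, r)) :
  mxdirect (\sum_j <<A j>>) ->
  forall u : 'I_l -> 'rV_n, \sum_j u j *m A j = 0 -> forall j, u j *m A j = 0.
Proof.
move/mxdirect_sumsP => H u Hu j; have := H j isT => Hcap.
apply/eqP; rewrite -submx0 -Hcap sub_capmx; apply/andP; split.
  by rewrite genmxE submxMl.
apply/sub_sums_genmxP; exists (fun j' => - u j').
have := Hu; rewrite (bigD1 j) //= => /eqP; rewrite addr_eq0 => /eqP ->.
rewrite -sumrN; apply: eq_bigr => j' _; by rewrite mulNmx.
Qed.

End MxDirect.

Section Comb5.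
Variables (n r : nat) (s : 'I_n -> 'I_r -> int).
Local Notation rel := (@rel n r s).
Local Notation minrel := (@minrel n r s).

Lemma wmx_mulE B (u : 'rV_n) : u *m wmx s B = 0 <-> rel (restrict (fun i => u 0 i) B).
Proof.
have E k : (u *m wmx s B) 0 k = \sum_i restrict (fun i => u 0 i) B i * (s i k)%:~R.
  by rewrite mxE; apply: eq_bigr => i _; rewrite mxE /restrict; case: ifP; rewrite ?mulr0 ?mul0r.
split=> [H k|H]; first by rewrite -E H mxE.
by apply/rowP => k; rewrite E H mxE.
Qed.

Lemma wmx_sum l (I : 'I_l -> {set 'I_n}) :
  (forall j1 j2, j1 != j2 -> [disjoint I j1 & I j2]) -> (forall i, exists j, i \in I j) ->
  wmx s setT = \sum_j wmx s (I j).
Proof.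
move=> Hd Hc; apply/matrixP => i k; rewrite summxE !mxE in_setT.
have [j Hj] := Hc i.
rewrite (bigD1 j) //= big1 ?addr0; first by rewrite mxE Hj.
move=> j' Hj'; rewrite mxE; case: ifP => // Hij'.
have := Hd _ _ Hj'; move/pred0P => /(_ i) /=; by rewrite Hij' Hj.
Qed.

Lemma wmx_sum_eq l (I : 'I_l -> {set 'I_n}) :
  (forall j1 j2, j1 != j2 -> [disjoint I j1 & I j2]) -> (forall i, exists j, i \in I j) ->
  (wmx s setT == \sum_j <<wmx s (I j)>>)%MS.
Proof.
move=> Hd Hc; apply/andP; split.
  rewrite (wmx_sum Hd Hc); apply: summx_sub_sums => j _; by rewrite genmxE.
apply/sumsmx_subP => j _; rewrite genmxE.
have -> : wmx s (I j) = diag_mx (\row_i (i \in I j)%:R) *m wmx s setT.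
  by apply/matrixP => i k; rewrite mul_diag_mx !mxE in_setT; case: ifP;
     rewrite ?mul1r ?mul0r.
exact: submxMl.
Qed.

End Comb5.

Section Comb6.
Variables (n r : nat) (s : 'I_n -> 'I_r -> int).
Local Notation rel := (@rel n r s).
Local Notation minrel := (@minrel n r s).

Definition partcond l (I : 'I_l.+1 -> {set 'I_n}) : Prop :=
    (forall j1 j2, j1 != j2 -> [disjoint I j1 & I j2]) /\
    (\bigcup_(j < l.+1) I j = [set: 'I_n]) /\
    (wmx s [set: 'I_n] == (\sum_(j < l.+1) <<wmx s (I j)>>)%MS)%MS /\
    mxdirect (\sum_(j < l.+1) <<wmx s (I j)>>)%MS /\
    \rank (wmx s (I ord0)) = #|I ord0| /\
    (forall j : 'I_l.+1, j != ord0 -> (\rank (wmx s (I j))).+1 = #|I j|) /\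
    (forall j : 'I_l.+1, j != ord0 -> zero_in_open_hull s (I j)).

Lemma wmx_entry B (u : 'rV_n) k :
  (u *m wmx s B) 0 k = \sum_i restrict (fun i => u 0 i) B i * (s i k)%:~R.
Proof.
by rewrite mxE; apply: eq_bigr => i _; rewrite mxE /restrict; case: ifP; rewrite ?mulr0 ?mul0r.
Qed.

Lemma restrict_sum l (I : 'I_l -> {set 'I_n}) (u : 'I_l -> 'I_n -> rat) j i :
  (forall j1 j2, j1 != j2 -> [disjoint I j1 & I j2]) ->
  restrict (fun i => \sum_j' restrict (u j') (I j') i) (I j) i = restrict (u j) (I j) i.
Proof.
move=> Hd; rewrite /restrict; case: ifP => // Hi.
rewrite (bigD1 j) //= Hi big1 ?addr0 // => j' Hj'; case: ifP => // Hij'.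
have := Hd _ _ Hj'; move/pred0P => /(_ i) /=; by rewrite Hij' Hi.
Qed.

Theorem comb_fwd (HC : Cpp s) : exists l I, @partcond l I.
Proof.
exists #|circs s|, (@blk n r s).
have Hd := blk_disj HC.
have Hc := blk_cover s.
split => //; split.
  by apply/setP => i; rewrite in_setT; apply/bigcupP; have [j Hj] := Hc i; exists j.
split; first exact: wmx_sum_eq.
split.
  apply: mxdirect_crit => u Hu j.
  pose m i := \sum_j' restrict (fun i => u j' 0 i) (blk j') i.
  have Hm : rel m.
    move=> k; have Hu' : \sum_j (u j *m wmx s (blk j)) 0 k = 0.
      by rewrite -summxE Hu mxE.
    apply: (etrans _ Hu'); under [RHS]eq_bigr do rewrite wmx_entry.
    rewrite exchange_big /=; apply: eq_bigr => i _; by rewrite /m mulr_suml.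
  have := blockrel HC Hm j; move=> H; apply/wmx_mulE.
  by apply: rel_ext H => i; rewrite restrict_sum.
split; first by rewrite blk0; apply/indep_rank; exact: I0_indep.
have Hcirc (j : 'I_#|circs s|.+1) : j != ord0 -> exists a, [/\ minrel a, supp a = blk j & forall i, 0 <= a i].
  case: (unliftP ord0 j) => [j'|] -> //; rewrite blkS => _; have := enum_valP j'; by case/circsP => a Ha; exists a.
split.
  move=> j Hj; have [a [Ha Hsa _]] := Hcirc j Hj; exact: (circ_rank Ha Hsa).
move=> j Hj; have [a [Ha Hsa Ha0]] := Hcirc j Hj.
have [Har Hne _] := Ha.
pose sig := \sum_(i in blk j) a i.
have Hpos i : i \in blk j -> 0 < a i.
  by move=> Hi; rewrite lt_neqAle eq_sym -in_supp Hsa Hi Ha0.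
have Hsig : 0 < sig.
  have [i0 Hi0] : exists i0, i0 \in supp a by apply/set0Pn.
  rewrite Hsa in Hi0.
  rewrite /sig (bigD1 i0) //=; apply: ltr_pwDl; first exact: Hpos.
  by apply: sumr_ge0 => i _.
exists (fun i => a i / sig); split.
  by move=> i Hi; apply: divr_gt0 => //; apply: Hpos.
split.
  by rewrite -mulr_suml mulfV // gt_eqF.
move=> k; have := Har k.
rewrite (bigID (fun i => i \in blk j)) /= [X in _ + X]big1 ?addr0; last first.
  move=> i Hi; have -> : a i = 0.
    by apply/eqP; apply: contraNT Hi => H; rewrite -Hsa in_supp.
  by rewrite mul0r.
move=> H; under eq_bigr do rewrite mulrAC.
by rewrite -mulr_suml H mul0r.
Qed.

Lemma restrict_supp (m : 'I_n -> rat) (B : {set 'I_n}) : supp (restrict m B) \subset B.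
Proof.
apply/subsetP => i; rewrite in_supp /restrict; case: ifP => //; by rewrite eqxx.
Qed.

Theorem comb_bwd : (exists l I, @partcond l I) -> Cpp s.
Proof.
case=> l [I [Hd [Hcov [Heq [Hdir [Hr0 [Hrk Hhull]]]]]]].
have Hc i : exists j, i \in I j.
  have : i \in \bigcup_(j < l.+1) I j by rewrite Hcov in_setT.
  by case/bigcupP => j _ Hj; exists j.
move=> J HJ m Hm Hsub.
have Hblk j : rel (restrict m (I j)).
  have Hs : \sum_j0 (\row_i m i) *m wmx s (I j0) = 0.
    rewrite -mulmx_sumr -(wmx_sum s Hd Hc); apply/wmx_mulE.
    by apply: rel_ext Hm => i; rewrite /restrict in_setT mxE.
  have := @mxdirect_use _ _ _ _ Hdir (fun _ => \row_i m i) Hs j; move/wmx_mulE.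
  by apply: rel_ext => i; rewrite /restrict mxE.
have Hzero j : forall i, restrict m (I j) i = 0.
  case: (eqVneq j ord0) => [->|Hj].
    by apply/supp_eq0; apply: (proj2 (indep_rank s (I ord0)) Hr0);
       [apply: Hblk | apply: restrict_supp].
  have [a [Hpos [Hsum Hrel]]] := Hhull j Hj.
  pose a' := restrict a (I j).
  have Ha' : rel a'.
    move=> k; apply: (etrans _ (Hrel k)); rewrite [RHS]big_mkcond /=; apply: eq_bigr => i _.
    by rewrite /a' /restrict; case: ifP => _; rewrite ?mul0r.
  have Hsa' : supp a' = I j.
    apply/setP => i; rewrite in_supp /a' /restrict; case: ifP => Hi; last by rewrite eqxx.
    by rewrite gt_eqF // Hpos.
  have [al Hal] := rank1_unique (Hrk j Hj) Ha' Hsa' (Hblk j) (restrict_supp _ _).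
  case: (eqVneq al 0) => [E|Hal0]; first by move=> i; rewrite Hal E mul0r.
  exfalso; apply: HJ; exists a'; split => //.
  - by move=> i; rewrite /a' /restrict; case: ifP => // Hi; apply: ltW; apply: Hpos.
  - rewrite Hsa'; apply/eqP => E; have := Hrk j Hj; rewrite E cards0 //.
  - rewrite Hsa'; apply/subsetP => i Hi; apply: (subsetP Hsub).
    rewrite in_supp; have := Hal i; rewrite /restrict /a' Hi => ->.
    by rewrite mulf_eq0 negb_or Hal0 /= /restrict Hi gt_eqF //; apply: Hpos.
apply/supp_eq0 => i; have [j Hj] := Hc i; have := Hzero j i; by rewrite /restrict Hj.
Qed.

End Comb6.

Section CpSec.
Variables (n r : nat) (s : 'I_n -> 'I_r -> int).
Local Notation rel := (@rel n r s).

Definition Cp := forall J : {set 'I_n},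
  (exists lam : 'I_r -> rat, forall i, i \in J -> 0 < \sum_k lam k * (s i k)%:~R) ->
  indep s J.

Lemma Cp_Cpp : Cp -> Cpp s.
Proof.
move=> HCp J HJ.
pose I := {i : 'I_n | i \in J}.
pose v (x : I) k : rat := (s (val x) k)%:~R.
have [[lam Hl]|[m [Hm0 [[x0 Hx0] Hrel]]]] := gordan v.
  apply: HCp; exists lam => i Hi; exact: (Hl (exist _ i Hi)).
exfalso; apply: HJ.
pose m' i := \sum_(x : I | val x == i) m x.
exists m'; split.
- move=> k; apply: (etrans _ (Hrel k)).
  rewrite (partition_big (fun x : I => val x) xpredT) //=.
  apply: eq_bigr => i _; rewrite /m' mulr_suml; apply: eq_bigr => x /eqP <-.
  done.
- by move=> i; apply: sumr_ge0 => x _.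
- apply/set0Pn; exists (val x0); rewrite in_supp gt_eqF //.
  rewrite /m' (bigD1 x0) //=; apply: ltr_pwDl => //; by apply: sumr_ge0 => x _.
- apply/subsetP => i; rewrite in_supp; apply: contraR => Hi.
  apply/eqP; apply: big_pred0 => x; apply/negP => /eqP E.
  by move: (valP x); rewrite E (negbTE Hi).
Qed.

End CpSec.

Lemma clear_den (I : finType) (f : I -> rat) :
  exists2 d : int, 0 < d & exists F : I -> int, forall i, (F i)%:~R = d%:~R * f i.
Proof.
exists (\prod_i denq (f i)); first by apply: prodr_gt0 => i _; apply: denq_gt0.
exists (fun i => numq (f i) * \prod_(j | j != i) denq (f j)) => i.
rewrite /= intrM numqE rmorph_prod [in RHS]rmorph_prod [in RHS](bigD1 i) //=.
ring.
Qed.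

Section FieldExp.
Variable K : fieldType.

Lemma exp0z_neq (z : int) : z != 0 -> (0 : K) ^ z = 0.
Proof.
by move=> Hz; rewrite exp0rz (negbTE Hz).
Qed.

Lemma exprzMl_f (x y : K) (z : int) : (x * y) ^ z = x ^ z * y ^ z.
Proof.
case: (eqVneq z 0) => [->|Hz]; first by rewrite !expr0z mulr1.
case: (eqVneq x 0) => [->|Hx]; first by rewrite mul0r exp0z_neq // mul0r.
case: (eqVneq y 0) => [->|Hy]; first by rewrite mulr0 exp0z_neq // mulr0.
by apply: exprzMl; rewrite unitfE.
Qed.

Lemma prod_exprz (I : Type) (r : seq I) (P : pred I) (x : K) (f : I -> int) :
  x != 0 -> \prod_(i <- r | P i) x ^ (f i) = x ^ (\sum_(i <- r | P i) f i).
Proof.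
move=> Hx; apply/esym; apply: (big_morph (fun z : int => x ^ z)).
  by move=> a b; apply: exprzDr; rewrite unitfE.
by rewrite expr0z.
Qed.

Lemma prod_exprzl (I : Type) (r : seq I) (P : pred I) (F : I -> K) (z : int) :
  (\prod_(i <- r | P i) F i) ^ z = \prod_(i <- r | P i) F i ^ z.
Proof.
apply: (big_morph (fun x : K => x ^ z)); first by move=> a b; apply: exprzMl_f.
by rewrite exp1rz.
Qed.

Lemma prod_exp_swap (A B : finType) (z : B -> K) (G : A -> B -> int) (e : A -> int) :
  (forall b, z b != 0) ->
  \prod_a (\prod_b z b ^ G a b) ^ e a = \prod_b z b ^ (\sum_a G a b * e a).
Proof.
move=> Hz; under eq_bigr do rewrite prod_exprzl.
under eq_bigr do under eq_bigr do rewrite exprz_exp.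
rewrite exchange_big /=; apply: eq_bigr => b _; exact: prod_exprz.
Qed.

Lemma closed_root (L : closedFieldType) (d : nat) (y : L) : (0 < d)%N ->
  exists z : L, z ^+ d = y.
Proof.
move=> Hd; have [z Hz] := @solve_monicpoly L d (fun i => if i == 0%N then y else 0) Hd.
exists z; rewrite Hz (bigD1 (Ordinal Hd)) //= big1 ?addr0 ?expr0 ?mulr1 //.
move=> i Hi; case: ifP => Hi0; last by rewrite mul0r.
by move: Hi; rewrite -val_eqE /= (eqP Hi0).
Qed.

End FieldExp.

Lemma natf_inj (K : fieldType) : [pchar K] =i pred0 -> injective (fun n : nat => n%:R : K).
Proof.
move=> hK m1 m2 /= E; apply/eqP; apply: contraT => Hne.
wlog Hlt : m1 m2 E Hne / (m1 < m2)%N.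
  move=> W; case: (ltngtP m1 m2) => H; first exact: W H.
    by apply: (W m2 m1) => //; rewrite eq_sym.
  by rewrite H eqxx in Hne.
have H0 : (m2 - m1)%:R == 0 :> K by rewrite natrB ?E ?subrr // ltnW.
have Hpos : (0 < m2 - m1)%N by rewrite subn_gt0.
have [p Hp] := natf0_pchar Hpos H0.
by have := hK p; rewrite Hp.
Qed.

Lemma In_map_seq {T : eqType} {U : Type} (f : T -> U) (l : seq T) x :
  x \in l -> List.In (f x) (map f l).
Proof.
elim: l => [//|y l IH]; rewrite inE => /orP[/eqP->|/IH H]; [by left | by right].
Qed.

Lemma In_mem_map {U : Type} {V : eqType} (f : U -> V) (l : seq U) y :
  List.In y l -> f y \in map f l.
Proof.
elim: l => [//|z l IH] /= [->|/IH H]; rewrite inE; [by rewrite eqxx | by rewrite H orbT].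
Qed.

Section Analytic.
Variables (K : closedFieldType) (n r : nat) (s : 'I_n -> 'I_r -> int).

Lemma chi_rel (t : 'I_r -> K) (M : 'I_n -> int) : torus t ->
  (forall k, \sum_i s i k * M i = 0) -> \prod_i (char_eval (s i) t) ^ (M i) = 1.
Proof.
move=> Ht HM; rewrite /char_eval (@prod_exp_swap K _ _ t (fun i k => s i k) M Ht).
by apply: big1 => k _; rewrite HM expr0z.
Qed.

Lemma monomial_obstruction (x : 'I_n -> K) (M : 'I_n -> nat) : nilpotent s x ->
  (forall k, \sum_i s i k * (M i)%:Z = 0) -> (forall i, (0 < M i)%N -> x i != 0) ->
  (exists i, (0 < M i)%N) -> False.
Proof.
move=> Hnil HM Hx [i0 Hi0].
pose mnm : 'X_{1.. n} := [multinom M i | i < n].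
pose c := \prod_i x i ^+ M i.
pose p : {mpoly K[n]} := 'X_[mnm] - c%:MP.
have Hc : c != 0.
  apply/prodf_neq0 => i _; rewrite expf_eq0 negb_and.
  case: (posnP (M i)) => [//|Hpos]; by rewrite (Hx _ Hpos) orbT.
have H0 := Hnil p.
have Hp0 : p.@[fun _ => 0] = - c.
  rewrite /p mevalB mevalC mevalX (bigD1 i0) //= mnmE expr0n.
  by rewrite gtn_eqF // mul0r sub0r.
suff : p.@[fun _ => 0] = 0 by rewrite Hp0 => /eqP; rewrite oppr_eq0 (negbTE Hc).
apply: H0 => y [t [Ht ->]].
rewrite /p mevalB mevalC mevalX.
under eq_bigr do rewrite mnmE /tact exprMn.
rewrite big_split /=.
have := chi_rel Ht (M := fun i => (M i)%:Z) HM.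
rewrite /exprz /= => ->; by rewrite mul1r subrr.
Qed.

End Analytic.

Section Trans.
Variables (K : closedFieldType) (n r : nat) (s : 'I_n -> 'I_r -> int).

Lemma torus_transitive (J : {set 'I_n}) (y : 'I_n -> K) : indep s J ->
  (forall i, i \in J -> y i != 0) ->
  exists t, torus t /\ forall i, i \in J -> char_eval (s i) t = y i.
Proof.
move=> HJ Hy.
have Hrk : \rank (MS s J) = #|J| by rewrite -rank_wmx; apply/indep_rank.
have /row_freeP [B HB] : row_free (MS s J) by rewrite /row_free Hrk.
have [d Hd [F HF]] := clear_den (fun kb : 'I_r * 'I_#|J| => B kb.1 kb.2).
pose dn := `|d|%N.
have Hdz : d = dn%:Z by rewrite /dn gtz0_abs.
have Hdn : (0 < dn)%N by rewrite -ltz_nat -Hdz.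
have Heq a b : \sum_k F (k, b) * s (@fS n J a) k = (a == b)%:Z * d.
  apply: (@intr_inj rat); rewrite rmorph_sum /=.
  under eq_bigr do rewrite intrM HF.
  move/matrixP: (HB) => /(_ a b); rewrite !mxE => H.
  have Hab : ((a == b)%:Z)%:~R = (a == b)%:R :> rat by case: (a == b).
  rewrite intrM mulrC Hab -H mulr_sumr; apply: eq_bigr => k _.
  by rewrite /MS !mxE in_setT /fS; ring.
have Hz : forall b : 'I_#|J|, exists z : K, z ^+ dn = y (@fS n J b).
  by move=> b; apply: closed_root.
have [z Hzb] := fin_all_exists Hz.
have Hz0 b : z b != 0.
  apply/eqP => E; have := Hzb b; rewrite E expr0n gtn_eqF // => /esym /eqP.
  by apply/negP; apply: Hy; apply: fS_in.
exists (fun k => \prod_b z b ^ F (k, b)); split.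
  by move=> k; apply/prodf_neq0 => b _; apply: expfz_neq0.
move=> i Hi; pose a := enum_rank_in Hi i.
have Ha : @fS n J a = i by rewrite /fS /a enum_rankK_in.
rewrite /char_eval (@prod_exp_swap K _ _ z (fun k b => F (k, b)) (fun k => s i k) Hz0).
rewrite (bigD1 a) //= [X in _ * X]big1 ?mulr1.
  by rewrite -Ha Heq eqxx mul1r Hdz -exprnP Hzb.
move=> b Hb; rewrite -Ha Heq eq_sym (negbTE Hb) mul0r; exact: expr0z.
Qed.

End Trans.

Theorem cpp_visible (K : closedFieldType) (n r : nat) (s : 'I_n -> 'I_r -> int) :
  Cpp s -> visible K s.
Proof.
move=> HC.
pose ind (J : {set 'I_n}) : 'I_n -> K := fun i => if i \in J then 1 else 0.
exists [seq ind J | J <- enum [set: {set 'I_n}]] => x Hx.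
pose J := [set i | x i != 0].
have HnJ : ~ nonneg_rel s J.
  case=> m [Hm Hm0 Hne Hsub].
  have [d Hd [F HF]] := clear_den m.
  have HF0 i : 0 <= F i by rewrite -(ler0z rat) HF mulr_ge0 // ler0z ltW.
  have HFm i : (F i != 0) = (m i != 0).
    apply/idP/idP => H; apply: contra H => /eqP E.
      by have := HF i; rewrite E mulr0 => /eqP; rewrite intr_eq0.
    have := HF i; rewrite E mulr0z => /esym /eqP; rewrite mulf_eq0 intr_eq0 gt_eqF //.
  have [i0 Hi0] : exists i0, i0 \in supp m by apply/set0Pn.
  apply: (@monomial_obstruction K n r s x (fun i => `|F i|%N) Hx).
  - move=> k; apply: (@intr_inj rat); rewrite rmorph_sum /= rmorph0.
    under eq_bigr do rewrite gez0_abs // intrM HF.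
    have := Hm k; move=> Hk.
    transitivity (d%:~R * \sum_i m i * (s i k)%:~R); last by rewrite Hk mulr0.
    rewrite mulr_sumr; apply: eq_bigr => i _; ring.
  - move=> i; rewrite absz_gt0 HFm -in_supp => /(subsetP Hsub); by rewrite inE.
  - by exists i0; rewrite absz_gt0 HFm -in_supp.
have HJ := HC J HnJ.
have Hxy : forall i, i \in J -> x i != 0 by move=> i; rewrite inE.
have [t [Ht Htx]] := torus_transitive HJ Hxy.
exists (ind J); first by apply: (In_map_seq (fun J0 => ind J0)); rewrite mem_enum in_setT.
exists t; split => //; apply: functional_extensionality => i; rewrite /tact /ind.
case: ifP => Hi; first by rewrite mulr1 Htx.
by rewrite mulr0; move: Hi; rewrite inE => /negbFE /eqP.
Qed.

Section F1.
Variables (K : closedFieldType) (hK : [pchar K] =i pred0).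
Variables (n r : nat) (s : 'I_n -> 'I_r -> int).

Lemma succ_natf_neq0 k : (k.+1%:R : K) != 0.
Proof. by apply/eqP => E; have := natf_inj hK (E : k.+1%:R = 0%:R). Qed.

Lemma powz_inj (e : int) : e != 0 -> injective (fun k : nat => (k.+1%:R : K) ^ e).
Proof.
move=> He k1 k2 /=; case: e He => [p|p] Hp E.
  have Hp0 : (0 < p)%N by case: p Hp {E}.
  move: E; rewrite -!exprnP -!natrX => /(natf_inj hK) /(expIn Hp0); by case.
move: E => /= /invr_inj; rewrite -!natrX => /(natf_inj hK) /(expIn (ltn0Sn p)); by case.
Qed.

Theorem visible_cp : visible K s -> Cp s.
Proof.
move=> [xs Hxs] J [lam Hlam] m Hm Hsub.
apply/eqP; apply: contraT => Hne.
have [dL HdL [L HL]] := clear_den lam.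
pose e i := \sum_k L k * s i k.
have He i : i \in J -> 0 < e i.
  move=> Hi; rewrite -(ltr0z rat) rmorph_sum /=.
  under eq_bigr do rewrite intrM HL -mulrA.
  by rewrite -mulr_sumr mulr_gt0 ?ltr0z // Hlam.
have He' i : i \in J -> e i = (`|e i|%N)%:Z.
  by move=> Hi; rewrite gez0_abs // ltW // He.
have He'' i : i \in J -> (0 < `|e i|)%N.
  by move=> Hi; rewrite absz_gt0 gt_eqF // He.
have [dM HdM [M HM]] := clear_den m.
have HMm i : (M i != 0) = (m i != 0).
  apply/idP/idP => H; apply: contra H => /eqP E.
    by have := HM i; rewrite E mulr0 => /eqP; rewrite intr_eq0.
  have := HM i; rewrite E mulr0z => /esym /eqP; rewrite mulf_eq0 intr_eq0 gt_eqF //.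
have HMrel k : \sum_i s i k * M i = 0.
  apply: (@intr_inj rat); rewrite rmorph_sum /= rmorph0.
  under eq_bigr do rewrite intrM HM.
  transitivity (dM%:~R * \sum_i m i * (s i k)%:~R); last by rewrite Hm mulr0.
  rewrite mulr_sumr; apply: eq_bigr => i _; ring.
have [i0 Hi0] : exists i0, i0 \in supp m by apply/set0Pn.
have Hi0J : i0 \in J by apply: (subsetP Hsub).
have HM0 : M i0 != 0 by rewrite HMm -in_supp.
have HMJ i : i \notin J -> M i = 0.
  move=> Hi; apply/eqP; apply: contraNT Hi; rewrite HMm -in_supp => H.
  exact: (subsetP Hsub).
pose xa (a : K) : 'I_n -> K := fun i => if i \in J then (if i == i0 then a else 1) else 0.
pose f (y : 'I_n -> K) := \prod_i y i ^ M i.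
have Hinv y x' : orbit s y x' -> f x' = f y.
  case=> t [Ht ->]; rewrite /f /tact.
  under eq_bigr do rewrite exprzMl_f.
  by rewrite big_split /= chi_rel // mul1r.
have Hfx a : f (xa a) = a ^ M i0.
  rewrite /f (bigD1 i0) //= [X in _ * X]big1 ?mulr1; first by rewrite /xa Hi0J eqxx.
  move=> i Hi; rewrite /xa; case: ifP => HiJ; first by rewrite (negbTE Hi) exp1rz.
  by rewrite HMJ ?HiJ // expr0z.
have Hnil a : nilpotent s (xa a).
  move=> p Hp.
  pose h i : {poly K} := (xa a i) *: 'X^(`|e i|%N).
  pose q : {poly K} := \sum_(mm <- msupp p) (p@_mm)%:P * \prod_i (h i) ^+ (mm i).
  have Hq c : q.[c] = p.@[fun i => xa a i * c ^+ `|e i|%N].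
    rewrite mevalE /q horner_sum; apply: eq_bigr => mm _.
    rewrite hornerM hornerC horner_prod; congr (_ * _); apply: eq_bigr => i _.
    by rewrite horner_exp hornerZ hornerXn.
  have Hqc c : c != 0 -> q.[c] = 0.
    move=> Hc; rewrite Hq; apply: Hp; exists (fun k => c ^ L k); split.
      by move=> k; apply: expfz_neq0.
    apply: functional_extensionality => i; rewrite /tact.
    case: (boolP (i \in J)) => Hi; last by rewrite /xa (negbTE Hi) mul0r mulr0.
    rewrite mulrC; congr (_ * _).
    rewrite /char_eval; under eq_bigr do rewrite exprz_exp.
    by rewrite prod_exprz // -/(e i) [in RHS](He' i Hi).
  have q0 : q = 0.
    apply/eqP; apply: contraT => Hq0.
    pose rs := [seq (k.+1%:R : K) | k <- iota 0 (size q)].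
    have Hall : all (root q) rs.
      by apply/allP => c /mapP [k _ ->]; rewrite /root Hqc // succ_natf_neq0.
    have Hu : uniq rs.
      rewrite map_inj_uniq ?iota_uniq // => k1 k2 /= E.
      by have := natf_inj hK E; case.
    by have := max_poly_roots Hq0 Hall Hu; rewrite size_map size_iota ltnn.
  have := Hq 0; rewrite q0 horner0 => /esym H.
  rewrite -H; apply: meval_eq => i /=.
  case: (boolP (i \in J)) => Hi; last by rewrite /xa (negbTE Hi) mul0r.
  by rewrite expr0n gtn_eqF ?He'' // mulr0.
pose N := size xs.
have Hmem k : (k.+1%:R : K) ^ M i0 \in map f xs.
  have [y Hy Hor] := Hxs (xa k.+1%:R) (Hnil _).
  by rewrite -Hfx (Hinv _ _ Hor); apply: In_mem_map.
have Huniq : uniq [seq (k.+1%:R : K) ^ M i0 | k <- iota 0 N.+1].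
  by rewrite map_inj_uniq ?iota_uniq //; apply: powz_inj.
have Hsub2 : {subset [seq (k.+1%:R : K) ^ M i0 | k <- iota 0 N.+1] <= map f xs}.
  by move=> c /mapP [k _ ->]; exact: Hmem.
by have := uniq_leq_size Huniq Hsub2; rewrite !size_map size_iota ltnn.
Qed.

End F1.

Unset Implicit Arguments. Set Strict Implicit.

Theorem proposition3p5 (K : closedFieldType) (hK : [pchar K] =i pred0)
  (r n : nat) (s : 'I_n -> 'I_r -> int) :
  visible K s <->
  exists (l : nat) (I : 'I_l.+1 -> {set 'I_n}),
    (* partition of {1..n} into I_0, ..., I_l *)
    (forall j1 j2, j1 != j2 -> [disjoint I j1 & I j2]) /\
    (\bigcup_(j < l.+1) I j = [set: 'I_n]) /\
    (* (i) *)
    (wmx s [set: 'I_n] == (\sum_(j < l.+1) <<wmx s (I j)>>)%MS)%MS /\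
    mxdirect (\sum_(j < l.+1) <<wmx s (I j)>>)%MS /\
    (* (ii) *)
    \rank (wmx s (I ord0)) = #|I ord0| /\
    (forall j : 'I_l.+1, j != ord0 -> (\rank (wmx s (I j))).+1 = #|I j|) /\
    (* (iii) *)
    (forall j : 'I_l.+1, j != ord0 -> zero_in_open_hull s (I j)).
Proof.
split.
  move=> Hv; exact: (comb_fwd (Cp_Cpp (visible_cp hK Hv))).
move=> H; apply: cpp_visible; apply: comb_bwd; exact: H.
Qed.
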